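(* Any quantum algorithm that estimates the non-linearity $\eta(f)$ of a given Boolean function $f$ (given as an oracle) to within additive accuracy $\lambda$ uses $\Omega(1/\lambda)$ queries.
   Context: For $f:\{0,1\}^n\to\{0,1\}$, the Walsh–Hadamard coefficient at $a$ is $\hat f(a)=\frac{1}{2^n}\sum_{x}(-1)^{f(x)\oplus a\cdot x}$, $\hat f_{max}=\max_a|\hat f(a)|$, and the non-linearity is $\eta(f)=\frac12-\frac12\hat f_{max}$. The lower bound is for bounded-error algorithms that must succeed on every $f$; queries are calls to the oracle for $f$. *)

(* Defs.v *)
From mathcomp Require Import all_boot all_order all_algebra all_field.
Set Implicit Arguments. Unset Strict Implicit. Unset Printing Implicit Defensive.
Import Order.TTheory GRing.Theory Num.Theory.
Local Open Scope ring_scope.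

Definition bitvec (n : nat) := {ffun 'I_n -> bool}.

Definition dotb n (a x : bitvec n) : bool := odd (\sum_(i < n) (a i && x i)).

Definition walsh n (f : bitvec n -> bool) (a : bitvec n) : algC :=
  (2%:R ^+ n)^-1 * \sum_(x : bitvec n) (-1) ^+ (f x (+) dotb a x).

Definition walsh_max n (f : bitvec n -> bool) : algC :=
  \big[Num.max/0]_(a : bitvec n) `|walsh f a|.

Definition nonlinearity n (f : bitvec n -> bool) : algC :=
  2%:R^-1 - 2%:R^-1 * walsh_max f.

(* Computational basis: query register x (n qubits), answer qubit b,
   workspace register w ranging over a finite type W. *)
Definition basis n (W : finType) : finType := (bitvec n * bool * W)%type.

Definition qop (B : finType) := B -> B -> algC.
Definition qstate (B : finType) := B -> algC.

Definition apply_op (B : finType) (U : qop B) (psi : qstate B) : qstate B :=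
  fun i => \sum_(j : B) U i j * psi j.

Definition unitary (B : finType) (U : qop B) : Prop :=
  forall i j : B, \sum_(k : B) (U k i)^* * U k j = (i == j)%:R.

Definition oracle n (W : finType) (f : bitvec n -> bool) (psi : qstate (basis n W))
  : qstate (basis n W) :=
  fun i => let: (x, b, w) := i in psi (x, b (+) f x, w).

Definition init_state n (W : finType) (w0 : W) : qstate (basis n W) :=
  fun i => ((i == ([ffun => false], false, w0)) : bool)%:R.

Fixpoint run n (W : finType) (w0 : W) (U : nat -> qop (basis n W))
  (f : bitvec n -> bool) (t : nat) : qstate (basis n W) :=
  match t with
  | 0 => apply_op (U 0%N) (@init_state n W w0)
  | t'.+1 => apply_op (U t) (oracle f (run w0 U f t'))
  end.

Definition prob_out n (W : finType) (psi : qstate (basis n W))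
  (out : basis n W -> algC) (P : algC -> bool) : algC :=
  \sum_(i : basis n W | P (out i)) `|psi i| ^+ 2.

Definition estimates_nonlinearity n (W : finType) (w0 : W)
  (U : nat -> qop (basis n W)) (out : basis n W -> algC) (T : nat) (lam : algC)
  : Prop :=
  forall f : bitvec n -> bool,
    2%:R / 3%:R <= prob_out (run w0 U f T) out
                     (fun v => `|v - nonlinearity f| <= lam).

(* Main.v *)
Require Import Defs.
From mathcomp Require Import all_boot all_order all_algebra all_field.
From mathcomp Require Import ring zify.
Import Order.TTheory GRing.Theory Num.Theory.
Local Open Scope ring_scope.
Set Implicit Arguments. Unset Strict Implicit.

Section Arith.
Local Open Scope nat_scope.
Lemma arith1 a k : k + a = k * 8 -> a = k * 7. Proof. lia. Qed.
Lemma arith2 s k : 0 < k -> s <= k.+1 -> 4 * s <= k * 8. Proof. lia. Qed.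
Lemma arith4 k : k <= k * 8. Proof. lia. Qed.
Lemma arith3 x y k T : 0 < x -> 0 < k -> x * (k * 7) = y * k.+1 ->
  x * (k * 7) <= 18 * (T * (x + y)) -> 7 * k <= 162 * T.
Proof.
move=> x0 k0 e h.
have h1 : (7 * k * k.+1) * (x * (k * 7)) <= (18 * T * (8 * k + 1)) * (x * (k * 7)).
  have := leq_mul h (leqnn (7 * k * k.+1)).
  have -> : 18 * (T * (x + y)) * (7 * k * k.+1) = 18 * T * ((k.+1) * (x * (k * 7)) + 7 * k * (y * k.+1)) by ring.
  rewrite -e. have -> : (k.+1 * (x * (k * 7)) + 7 * k * (x * (k * 7))) = (8 * k + 1) * (x * (k * 7)) by ring.
  move=> h2; rewrite (mulnC (7 * k * k.+1)); apply: leq_trans h2 _; apply: eq_leq; ring.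
rewrite leq_pmul2r ?muln_gt0 ?x0 ?k0 // in h1.
nia.
Qed.
End Arith.

Lemma eqle (x y : algC) : x = y -> x <= y. Proof. by move->. Qed.

Section Q.
Variables (n : nat) (W : finType).
Local Notation B := (basis n W).

Definition ip (psi phi : qstate B) : algC := \sum_(i : B) (psi i)^* * phi i.
Definition mass (psi : qstate B) (P : pred (bitvec n)) : algC :=
  \sum_(i : B | P i.1.1) `|psi i| ^+ 2.

Lemma unitary_ip (U : qop B) psi phi : unitary U ->
  ip (apply_op U psi) (apply_op U phi) = ip psi phi.
Proof.
rewrite /ip /apply_op => HU.
under eq_bigr do rewrite rmorph_sum mulr_suml.
under eq_bigr do under eq_bigr do rewrite mulr_sumr.
rewrite exchange_big; apply: eq_bigr => j _; rewrite exchange_big /=.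
transitivity (\sum_k (psi j)^* * phi k * \sum_i (U i j)^* * U i k).
  apply: eq_bigr => k _; rewrite mulr_sumr; apply: eq_bigr => i _.
  by rewrite rmorphM /=; ring.
under eq_bigr do rewrite HU.
rewrite (bigD1 j) //= eqxx mulr1 big1 ?addr0 // => k /negbTE.
by rewrite eq_sym => ->; rewrite mulr0.
Qed.

Lemma oracleE (f : bitvec n -> bool) (psi : qstate B) (i : B) :
  oracle (W:=W) f psi i = psi (i.1.1, i.1.2 (+) f i.1.1, i.2).
Proof. by case: i => [[x b] w]. Qed.

Definition flipb (i : B) : B := (i.1.1, ~~ i.1.2, i.2).

Lemma flipbK : involutive flipb.
Proof. by case=> [[x b] w]; rewrite /flipb /= negbK. Qed.

Lemma amgm (a b al : algC) : a \is Num.real -> b \is Num.real -> 0 < al ->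
  a * b <= (al * a ^+ 2 + al^-1 * b ^+ 2) / 2%:R.
Proof.
move=> ra rb hal.
have h : 0 <= (al * a - b) ^+ 2 / al.
  apply: divr_ge0; last exact: ltW.
  by rewrite -realEsqr; apply: realB => //; apply: realM => //; apply: gtr0_real.
rewrite -subr_ge0.
have -> : (al * a ^+ 2 + al^-1 * b ^+ 2) / 2%:R - a * b = (al * a - b) ^+ 2 / al / 2%:R.
  by field; rewrite (gt_eqF hal).
by apply: divr_ge0.
Qed.

Lemma oracle_ip (f g : bitvec n -> bool) psi phi :
  `|ip psi phi - ip (oracle f psi) (oracle g phi)| <=
    mass psi [pred x | f x != g x] + mass phi [pred x | f x != g x].
Proof.
set h : B -> B := fun i => (i.1.1, i.1.2 (+) f i.1.1, i.2).
have hK : involutive h by case=> [[x b] w]; rewrite /h /= addbK.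
have -> : ip (oracle f psi) (oracle g phi) =
   \sum_(i : B) (psi i)^* * phi (i.1.1, i.1.2 (+) (f i.1.1 (+) g i.1.1), i.2).
  rewrite /ip (reindex_inj (inv_inj hK)); apply: eq_bigr => -[[x b] w] _.
  by rewrite !oracleE /h /= addbK addbA.
rewrite /ip -sumrB.
apply: le_trans (ler_norm_sum _ _ _) _.
apply: (@le_trans _ _ (\sum_(i : B | f i.1.1 != g i.1.1)
   (`|psi i| ^+ 2 + (`|phi i| ^+ 2 + `|phi (flipb i)| ^+ 2) / 2%:R))).
  rewrite [X in _ <= X]big_mkcond /=; apply: ler_sum => -[[x b] w] _ /=.
  case: (f x =P g x) => [->|/eqP hne] /=.
    by rewrite addbb addbF subrr normr0.
  have -> : f x (+) g x = true by case: (f x) (g x) hne => -[].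
  rewrite addbT -mulrBr normrM norm_conjC.
  apply: (@le_trans _ _ (`|psi (x, b, w)| * `|phi (x, b, w)| +
                        `|psi (x, b, w)| * `|phi (x, ~~ b, w)|)).
    by rewrite -mulrDr ler_wpM2l // ler_normB.
  have e : forall a c : algC, `|a| * `|c| <= (`|a| ^+ 2 + `|c| ^+ 2) / 2%:R.
    move=> a c; have := amgm (normr_real a) (normr_real c) ltr01.
    by rewrite invr1 !mul1r.
  apply: le_trans (lerD (e _ _) (e _ _)) _.
  by rewrite /flipb /=; apply: eqle; field.
rewrite big_split /= /mass; apply: lerD => //.
rewrite -mulr_suml big_split /=.
have -> : \sum_(i : B | f i.1.1 != g i.1.1) `|phi (flipb i)| ^+ 2 =
          \sum_(i : B | f i.1.1 != g i.1.1) `|phi i| ^+ 2.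
  by rewrite [RHS](reindex_inj (inv_inj flipbK)).
by apply: eqle; field.
Qed.


Lemma ip_norm (psi : qstate B) : ip psi psi = \sum_i `|psi i| ^+ 2.
Proof. by apply: eq_bigr => i _; rewrite normCKC. Qed.

Lemma oracle_same (f : bitvec n -> bool) (psi phi : qstate B) :
  ip (oracle f psi) (oracle f phi) = ip psi phi.
Proof.
have := oracle_ip f f psi phi.
rewrite /mass !big_pred0 => [| i | i]; rewrite ?inE ?eqxx //.
rewrite addr0 normr_le0 subr_eq0 => /eqP ->.
by [].
Qed.

Lemma init_ip (w0 : W) : ip (init_state w0) (init_state w0) = 1.
Proof.
rewrite /ip (bigD1 ([ffun => false], false, w0)) //= /init_state eqxx.
rewrite big1 ?addr0 ?conjC1 ?mulr1 // => i /negbTE ->.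
by rewrite mulr0.
Qed.

Lemma final_bound (psi phi : qstate B) (P : pred B) :
  ip psi psi = 1 -> ip phi phi = 1 ->
  2%:R / 3%:R <= \sum_(i | P i) `|psi i| ^+ 2 ->
  2%:R / 3%:R <= \sum_(i | ~~ P i) `|phi i| ^+ 2 ->
  `|ip psi phi| <= 17%:R / 18%:R.
Proof.
move=> npsi nphi hp hq.
rewrite !ip_norm (bigID P) /= in npsi; rewrite !ip_norm (bigID P) /= in nphi.
apply: le_trans (ler_norm_sum _ _ _) _.
under eq_bigr do rewrite normrM norm_conjC.
rewrite (bigID P) /=.
have h34 : 0 < 3%:R / 4%:R :> algC by apply: divr_gt0; rewrite ltr0n.
have h43 : 0 < 4%:R / 3%:R :> algC by apply: divr_gt0; rewrite ltr0n.
apply: le_trans.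
  apply: lerD; apply: ler_sum => i _.
    exact: (amgm (normr_real (psi i)) (normr_real (phi i)) h34).
  exact: (amgm (normr_real (psi i)) (normr_real (phi i)) h43).
rewrite -!mulr_suml !big_split /= -!mulr_sumr.
move: npsi nphi hp hq.
set pA := \sum_(i | P i) _; set pC := \sum_(i | ~~ P i) `|psi i| ^+ 2.
set qA := \sum_(i | P i) _; set qC := \sum_(i | ~~ P i) `|phi i| ^+ 2.
move=> npsi nphi hp hq.
have -> : pC = 1 - pA by rewrite -npsi; ring.
have -> : qA = 1 - qC by rewrite -nphi; ring.
rewrite -subr_ge0.
have -> : 17%:R / 18%:R -
  ((3%:R / 4%:R * pA + (3%:R / 4%:R)^-1 * (1 - qC)) / 2%:R +
   (4%:R / 3%:R * (1 - pA) + (4%:R / 3%:R)^-1 * qC) / 2%:R) =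
  7%:R / 24%:R * (pA - 2%:R / 3%:R) + 7%:R / 24%:R * (qC - 2%:R / 3%:R) :> algC.
  by field.
apply: addr_ge0; apply: mulr_ge0; rewrite ?subr_ge0 //.
by apply: divr_ge0; rewrite ler0n.
by apply: divr_ge0; rewrite ler0n.
Qed.

Variables (w0 : W) (U : nat -> qop B) (T : nat).
Hypothesis HU : forall t, (t <= T)%N -> unitary (U t).

Lemma run_norm f t : (t <= T)%N -> ip (run w0 U f t) (run w0 U f t) = 1.
Proof.
elim: t => [|t IH] Ht /=.
  by rewrite unitary_ip ?init_ip //; apply: HU.
rewrite unitary_ip; last exact: HU.
by rewrite oracle_same; apply: IH; apply: ltnW.
Qed.

Lemma run_dist f g t : (t <= T)%N ->
  `|1 - ip (run w0 U f t) (run w0 U g t)| <=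
  \sum_(s < t) (mass (run w0 U f s) [pred x | f x != g x] +
                mass (run w0 U g s) [pred x | f x != g x]).
Proof.
elim: t => [|t IH] Ht.
  by rewrite big_ord0 /= unitary_ip ?init_ip ?subrr ?normr0 //; apply: HU.
rewrite big_ord_recr /=.
rewrite unitary_ip ?HU //.
apply: le_trans (ler_distD (ip (run w0 U f t) (run w0 U g t)) _ _) _.
apply: lerD; first exact: IH (ltnW Ht).
exact: oracle_ip.
exact: HU.
Qed.

Lemma eq_mass (psi : qstate B) (P1 P2 : pred (bitvec n)) :
  P1 =1 P2 -> mass psi P1 = mass psi P2.
Proof. by move=> e; apply: eq_bigl => i; rewrite e. Qed.

Lemma mass_ge0 (psi : qstate B) P : 0 <= mass psi P.
Proof. by apply: sumr_ge0 => i _; apply: exprn_ge0. Qed.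

Lemma mass_partition (J : finType) (p : bitvec n -> J) (psi : qstate B) :
  \sum_(j : J) mass psi [pred x | p x == j] = ip psi psi.
Proof.
rewrite ip_norm (partition_big (fun i : B => p i.1.1) xpredT) //.
Qed.

End Q.


Lemma foldr_prod (T : finType) (G : T -> nat) :
  foldr muln 1%N [seq G i | i : T] = (\prod_(i : T) G i)%N.
Proof.
rewrite -big_enum /= /image_mem.
elim: (enum T) => [|a s IH] /=; first by rewrite big_nil.
by rewrite big_cons IH.
Qed.

Lemma sum1C (T : finType) (P : pred T) : \sum_(i | P i) (1 : algC) = #|[pred i | P i]|%:R.
Proof. by rewrite -sum1_card natr_sum. Qed.

Section Walsh.
Variable n : nat.

Lemma dotb0 (x : bitvec n) : dotb [ffun => false] x = false.
Proof. by rewrite /dotb big1 // => i _; rewrite ffunE. Qed.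

Lemma sum_sign_dot (a : bitvec n) : a != [ffun => false] ->
  \sum_(x : bitvec n) (-1) ^+ dotb a x = 0 :> algC.
Proof.
move=> Ha.
case: (pickP (fun i => a i)) => [i ai | H]; last first.
  by case/eqP: Ha; apply/ffunP => i; rewrite ffunE; apply: H.
pose fl (x : bitvec n) : bitvec n := [ffun j => if j == i then ~~ x j else x j].
have flK : involutive fl.
  move=> x; apply/ffunP => j; rewrite !ffunE; case: (j == i) => //; exact: negbK.
have fld x : dotb a (fl x) = ~~ dotb a x.
  rewrite /dotb (bigD1 i) //= [in RHS](bigD1 i) //= ffunE eqxx ai /=.
  rewrite !oddD !oddb addNb; congr (~~ (_ (+) _)).
  congr odd; apply: eq_bigr => j hj; rewrite ffunE (negbTE hj) //.
set s := \sum_x _.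
have : s = - s.
  rewrite {1}/s (reindex_inj (inv_inj flK)) /=.
  by rewrite /s -sumrN; apply: eq_bigr => x _; rewrite fld signrN.
move/eqP; rewrite -subr_eq0 opprK -mulr2n -mulr_natr mulf_eq0 pnatr_eq0 orbF.
by move/eqP.
Qed.

Lemma card_bitvec : #|bitvec n| = (2 ^ n)%N.
Proof. by rewrite card_ffun card_bool card_ord. Qed.

Lemma walsh_gen (f : bitvec n -> bool) a :
  walsh f a * 2%:R ^+ n = \sum_x (-1) ^+ dotb a x - 2%:R * \sum_(x | f x) (-1) ^+ dotb a x.
Proof.
rewrite /walsh mulrC mulrA mulfV ?mul1r; last by rewrite expf_neq0 // pnatr_eq0.
rewrite [X in 2%:R * X]big_mkcond mulr_sumr /= -sumrB.
apply: eq_bigr => x _; rewrite signr_addb.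
by case: (f x) => /=; rewrite ?expr1 ?expr0 ?subr0 ?mulr0 ?mul1r //; ring.
Qed.

End Walsh.

Lemma bigmax_eq (T : finType) (F : T -> algC) a0 :
  (forall a, 0 <= F a) -> (forall a, F a <= F a0) ->
  \big[Num.max/0]_a F a = F a0.
Proof.
move=> F0 Fle.
have maxE (x y : algC) : Num.max x y = if x < y then y else x by [].
have gen : forall r : seq T,
  [/\ 0 <= \big[Num.max/0]_(a <- r) F a, \big[Num.max/0]_(a <- r) F a <= F a0
    & a0 \in r -> F a0 <= \big[Num.max/0]_(a <- r) F a].
  elim => [|a r [IH1 IH2 IH3]]; first by rewrite big_nil; split.
  rewrite big_cons maxE; set v := \big[_/_]_(_ <- r) _.
  case: ifP => hlt; split => //; rewrite in_cons.
    by case/orP => [/eqP -> | /IH3 //]; apply: ltW.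
  case/orP => [/eqP -> // | /IH3 h]; apply: le_trans h _.
  by rewrite real_leNgt ?hlt // ger0_real.
have [h1 h2 h3] := gen (index_enum T).
by apply/le_anti; rewrite h2 h3 // mem_index_enum.
Qed.

Lemma eta_weight n (f : bitvec n -> bool) :
  (4 * #|[pred x | f x]| <= 2 ^ n)%N ->
  nonlinearity f = #|[pred x | f x]|%:R / (2 ^ n)%:R.
Proof.
move=> hw; set w := #|[pred x | f x]|.
have h2n : (2%:R ^+ n : algC) != 0 by rewrite expf_neq0 // pnatr_eq0.
have wal0 : walsh f [ffun => false] = 1 - 2%:R * w%:R / 2%:R ^+ n.
  apply: (mulIf h2n); rewrite walsh_gen mulrBl mul1r divfK //.
  under eq_bigr do rewrite dotb0 expr0.
  under [X in _ - _ * X]eq_bigr do rewrite dotb0 expr0.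
  rewrite !sum1C.
  have -> : #|[pred i : bitvec n | true]| = #|bitvec n| by apply: eq_card.
  by rewrite card_bitvec natrX.
have walb a : a != [ffun => false] -> `|walsh f a| <= 2%:R * w%:R / 2%:R ^+ n.
  move=> ha.
  have e : walsh f a = (- (2%:R * \sum_(x | f x) (-1) ^+ dotb a x)) / 2%:R ^+ n.
    by apply: (mulIf h2n); rewrite walsh_gen divfK // sum_sign_dot // sub0r.
  rewrite e normrM normrN normrM normfV normrX normr_nat.
  rewrite ler_pM2r ?invr_gt0 ?exprn_gt0 ?ltr0n // ler_pM2l ?ltr0n //.
  apply: le_trans (ler_norm_sum _ _ _) _.
  under eq_bigr do rewrite normrX normrN normr1 expr1n.
  by rewrite sum1C.
have hw' : 2%:R * w%:R / 2%:R ^+ n <= 1 - 2%:R * w%:R / 2%:R ^+ n :> algC.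
  rewrite -subr_ge0.
  have -> : 1 - 2%:R * w%:R / 2%:R ^+ n - 2%:R * w%:R / 2%:R ^+ n =
     (2%:R ^+ n - 4%:R * w%:R) / 2%:R ^+ n :> algC by field.
  apply: divr_ge0; last by apply: exprn_ge0; apply: ler0n.
  by rewrite subr_ge0 -natrX -natrM ler_nat.
have wmax : walsh_max f = walsh f [ffun => false].
  rewrite /walsh_max (bigmax_eq (a0 := [ffun => false])) //.
    rewrite wal0 ger0_norm // (le_trans _ hw') //.
    by apply: divr_ge0; [apply: mulr_ge0; apply: ler0n| apply: exprn_ge0; apply: ler0n].
  move=> a; case: (a =P [ffun => false]) => [-> //|/eqP ha].
  rewrite wal0 [X in _ <= X]ger0_norm; first exact: le_trans (walb a ha) hw'.
  apply: le_trans hw'.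
  by apply: divr_ge0; [apply: mulr_ge0; apply: ler0n| apply: exprn_ge0; apply: ler0n].
rewrite /nonlinearity wmax wal0 natrX; field.
by rewrite expf_neq0 // pnatr_eq0.
Qed.

Section Blocks.
Variables (n m : nat) (Hmn : (m <= n)%N).

Definition blk (x : bitvec n) : bitvec m := [ffun i => x (widen_ord Hmn i)].

Lemma fiber_card z : #|[pred x : bitvec n | blk x == z]| = (2 ^ (n - m))%N.
Proof.
pose F (i : 'I_n) : pred bool :=
  fun b => if @insub _ (fun k => k < m)%N 'I_m (val i) is Some j then b == z j else true.
have e : [pred x : bitvec n | blk x == z] =i (family F : simpl_pred (bitvec n)).
  move=> x; rewrite inE; apply/eqP/familyP.
    move=> hz i; rewrite /F unfold_in; case: insubP => [j _ hj|_] //.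
    by rewrite -hz ffunE; apply/eqP; congr (x _); apply: val_inj.
  move=> H; apply/ffunP => j; rewrite ffunE; have := H (widen_ord Hmn j).
  rewrite /F unfold_in; case: insubP => [j' _ hj'|] /=; last by rewrite ltn_ord.
  by move/eqP => ->; congr (z _); apply: val_inj.
rewrite (eq_card e) card_family foldr_prod.
transitivity (\prod_(i < n) (if (i < m)%N then 1 else 2))%N.
  apply: eq_bigr => i _; rewrite /F; case: insubP => [j -> _|/negbTE -> ] /=.
    by rewrite (@eq_card _ _ (pred1 (z j))) ?card1 // => b; rewrite !inE.
  by rewrite (@eq_card _ _ (@predT bool)) ?card_bool.
rewrite -(big_mkord xpredT (fun i => if (i < m)%N then 1 else 2)%N).
rewrite (big_cat_nat (leq0n m) Hmn) /=.
rewrite (@eq_big_nat _ _ _ 0 m _ (fun _ => 1%N)); last by move=> i /andP [_ ->].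
rewrite (@eq_big_nat _ _ _ m n _ (fun _ => 2%N)); last first.
  by move=> i /andP [h _]; rewrite ltnNge h.
by rewrite !prod_nat_const_nat exp1n mul1n.
Qed.

Lemma weight_fS (S : {set bitvec m}) :
  #|[pred x : bitvec n | blk x \in S]| = (#|S| * 2 ^ (n - m))%N.
Proof.
rewrite -[LHS]sum1_card (partition_big blk (fun z => z \in S)) //=.
rewrite -sum_nat_const; apply: eq_bigr => z zS.
rewrite -(fiber_card z) -sum1_card; apply: eq_bigl => x; rewrite !inE.
by case: eqP => [->|]; rewrite ?zS ?andbF.
Qed.

Lemma eta_fS (S : {set bitvec m}) : (4 * #|S| <= 2 ^ m)%N ->
  nonlinearity (fun x : bitvec n => blk x \in S) = #|S|%:R / (2 ^ m)%:R.
Proof.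
move=> h.
have e2 : (2 ^ n = 2 ^ m * 2 ^ (n - m))%N by rewrite -expnD subnKC.
rewrite eta_weight; rewrite weight_fS ?e2.
  rewrite !natrM; field; rewrite ?pnatr_eq0 -?lt0n ?expn_gt0 //.
by rewrite mulnA leq_mul2r h orbT.
Qed.
End Blocks.


Lemma reindex_add (T : finType) k (G : {set T} -> T -> algC) :
  \sum_(S : {set T} | #|S| == k) \sum_(z | z \notin S) G (z |: S) z =
  \sum_(g : {set T} | #|g| == k.+1) \sum_(z | z \in g) G g z.
Proof.
rewrite !pair_big_dep /=.
rewrite (reindex_onto (fun p : {set T} * T => (p.1 :\ p.2, p.2))
                      (fun p => (p.2 |: p.1, p.2))) /=; last first.
  by case=> S z /= /andP [_ hz]; rewrite setU1K.
apply: eq_big => [[g z]|[g z]] /=.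
  rewrite setD11 andbT xpair_eqE eqxx andbT.
  case hz: (z \in g).
    by rewrite setD1K // (cardsD1 z g) hz add1n eqSS eqxx.
  rewrite andbF; apply/negbTE/negP => /andP [_ /eqP e].
  by move: hz; rewrite -e setU11.
by rewrite setD11 andbT xpair_eqE eqxx andbT => /andP [_ /eqP ->].
Qed.

Lemma sum_sub_le (T : finType) (P Q : pred T) (F : T -> algC) :
  (forall i, P i -> Q i) -> (forall i, 0 <= F i) ->
  \sum_(i | P i) F i <= \sum_(i | Q i) F i.
Proof.
move=> PQ F0; rewrite [X in X <= _]big_mkcond [X in _ <= X]big_mkcond.
apply: ler_sum => i _; case: (boolP (P i)) => hP; first by rewrite (PQ _ hP).
by case: (Q i).
Qed.

Lemma sumcC (T : finType) (P : pred T) (c : algC) :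
  \sum_(i | P i) c = c * #|[pred i | P i]|%:R.
Proof. by rewrite -sum1C mulr_sumr; apply: eq_bigr => i _; rewrite mulr1. Qed.


Theorem lemma6 :
  exists (c lam0 : algC), 0 < c /\ 0 < lam0 /\
    forall lam : algC, 0 < lam -> lam < lam0 ->
    exists N : nat, forall n : nat, (N <= n)%N ->
    forall (W : finType) (w0 : W) (U : nat -> qop (basis n W))
           (out : basis n W -> algC) (T : nat),
      (forall t : nat, (t <= T)%N -> unitary (U t)) ->
      (forall i, out i \is Num.real) ->
      estimates_nonlinearity w0 U out T lam ->
      c / lam <= T%:R.

Proof.
have h32 : (0 : algC) < 32%:R by rewrite ltr0n.
exists (1 / 1000%:R), (1 / 32%:R).
split; first by apply: divr_gt0; rewrite ?ltr0n ?ltr01.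
split; first by apply: divr_gt0; rewrite ?ltr0n ?ltr01.
move=> lam hlam hlam0.
have rlam : lam \is Num.real by apply: gtr0_real.
have hl32 : 0 < 32%:R * lam by apply: mulr_gt0.
pose P (b : nat) : bool := 1 <= 32%:R * lam * (2 ^ b)%:R.
have exP : exists b, P b.
  have hx : 0 <= (32%:R * lam)^-1 by apply: ltW; rewrite invr_gt0.
  have hb := archi_boundP hx.
  rewrite -(ltr_pM2l hl32) mulfV ?gt_eqF // in hb.
  exists (Num.bound ((32%:R * lam)^-1)); rewrite /P.
  apply: le_trans (ltW hb) _.
  rewrite ler_pM2l // ler_nat; apply: ltnW; apply: ltn_expl.
  done.
have h32l : 32%:R * lam < 1.
  by move: hlam0; rewrite -(ltr_pM2l h32) mul1r mulfV ?gt_eqF.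
case: (ex_minnP exP) => j Pj jmin.
case: j Pj jmin => [|j'] Pj jmin.
  by move: Pj; rewrite /P expn0 mulr1 real_leNgt ?h32l ?realE ?ler01 ?(ltW hl32).
have nP : ~~ P j' by apply/negP => /jmin; rewrite ltnn.
set k := (2 ^ j'.+1)%N.
have hA : 1 <= 32%:R * lam * k%:R by [].
have hB : 16%:R * lam * k%:R < 1.
  move: nP; rewrite /P -real_ltNge ?realE ?ler01 //; last first.
    by rewrite mulr_ge0 ?ler0n // ltW.
  rewrite /k expnS natrM => h; apply: le_lt_trans h; apply: eqle; ring.
have k0 : (0 < k)%N by rewrite expn_gt0.
set mm := (j'.+1 + 3)%N.
have hM : (2 ^ mm = k * 8)%N by rewrite /mm expnD.
exists mm => n hn W w0 U out T HU Hout Hest.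
pose fS (S : {set bitvec mm}) : bitvec n -> bool := fun x => blk hn x \in S.
have hM0 : ((2 ^ mm)%:R : algC) != 0 by rewrite pnatr_eq0 expn_eq0.
have etaS : forall S : {set bitvec mm}, (#|S| <= k.+1)%N ->
    nonlinearity (fS S) = #|S|%:R / (2 ^ mm)%:R.
  move=> S hS; apply: eta_fS; rewrite hM; exact: arith2.
have key : forall (S : {set bitvec mm}) z, #|S| = k -> z \notin S ->
  1 / 18%:R <= \sum_(s < T) (mass (run w0 U (fS S) s) [pred x | blk hn x == z] +
                  mass (run w0 U (fS (z |: S)) s) [pred x | blk hn x == z]).
  move=> S z hS hz.
  have ed : [pred x | fS S x != fS (z |: S) x] =1 [pred x | blk hn x == z].
    move=> x; rewrite /fS /= !inE.
    case: (blk hn x =P z) => [->|_] /=; first by rewrite (negbTE hz).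
    by case: (_ \in S).
  have hd := @run_dist _ _ w0 U T HU (fS S) (fS (z |: S)) T (leqnn T).
  suff h1 : 1 / 18%:R <= `|1 - ip (run w0 U (fS S) T) (run w0 U (fS (z |: S)) T)|.
    apply: le_trans h1 (le_trans hd _); apply: eqle; apply: eq_bigr => s _.
    by rewrite !(eq_mass _ ed).
  have hb : `|ip (run w0 U (fS S) T) (run w0 U (fS (z |: S)) T)| <= 17%:R / 18%:R.
    apply: (final_bound (P := fun i => `|out i - nonlinearity (fS S)| <= lam)).
    - exact: (@run_norm _ _ w0 U T HU _ T (leqnn T)).
    - exact: (@run_norm _ _ w0 U T HU _ T (leqnn T)).
    - exact: Hest (fS S).
    apply: le_trans (Hest (fS (z |: S))) _.
    rewrite /prob_out; apply: sum_sub_le => [i hi|i]; last exact: exprn_ge0.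
    apply/negP => hf.
    have : `|nonlinearity (fS (z |: S)) - nonlinearity (fS S)| <= lam + lam.
      apply: le_trans (ler_distD (out i) _ _) _.
      by rewrite (distrC _ (out i)); apply: lerD.
    rewrite !etaS ?cardsU1 ?hz ?hS //.
    have -> : ((true + k)%N%:R / (2 ^ mm)%:R - k%:R / (2 ^ mm)%:R) = 1 / (2 ^ mm)%:R :> algC.
      by rewrite natrD /= mulr1n; field.
    rewrite ger0_norm; last by apply: divr_ge0; rewrite ?ler01 ?ler0n.
    rewrite ler_pdivrMr ?ltr0n ?expn_gt0 // hM natrM => h.
    have : 16%:R * lam * k%:R < (lam + lam) * (k%:R * 8%:R).
      by apply: lt_le_trans hB h.
    by rewrite (_ : 16%:R * lam * k%:R = (lam + lam) * (k%:R * 8%:R)) ?ltxx //; ring.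
  apply: le_trans (lerB_dist 1 _); rewrite normr1 -subr_ge0.
  have -> : 1 - `|ip (run w0 U (fS S) T) (run w0 U (fS (z |: S)) T)| - 1 / 18%:R =
      17%:R / 18%:R - `|ip (run w0 U (fS S) T) (run w0 U (fS (z |: S)) T)| by field.
  by rewrite subr_ge0.
pose nX := #|[pred S : {set bitvec mm} | #|S| == k]|.
pose nY := #|[pred S : {set bitvec mm} | #|S| == k.+1]|.
pose Sx (F : {set bitvec mm} -> bitvec mm -> algC) :=
  \sum_(S : {set bitvec mm} | #|S| == k) \sum_(z | z \notin S) F S z.
have chain : Sx (fun _ _ => 1 / 18%:R) <= T%:R * (nX + nY)%:R.
  apply: (@le_trans _ _ (Sx (fun S z => \sum_(s < T)
     (mass (run w0 U (fS S) s) [pred x | blk hn x == z] +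
      mass (run w0 U (fS (z |: S)) s) [pred x | blk hn x == z])))).
    by apply: ler_sum => S /eqP hS; apply: ler_sum => z hz; apply: key.
  rewrite /Sx; under eq_bigr do rewrite exchange_big /=.
  rewrite exchange_big /=.
  have -> : T%:R * (nX + nY)%:R = \sum_(s < T) ((nX + nY)%:R : algC).
    by rewrite sumr_const card_ord mulr_natl.
  apply: ler_sum => s _.
  have -> : forall F G : {set bitvec mm} -> bitvec mm -> algC,
      \sum_(S : {set bitvec mm} | #|S| == k) \sum_(z : bitvec mm | z \notin S) (F S z + G S z) =
      \sum_(S : {set bitvec mm} | #|S| == k) \sum_(z : bitvec mm | z \notin S) F S z +
      \sum_(S : {set bitvec mm} | #|S| == k) \sum_(z : bitvec mm | z \notin S) G S z.
    by move=> F G; rewrite -big_split; apply: eq_bigr => S _; rewrite big_split.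
  rewrite natrD; apply: lerD.
    rewrite /nX -sum1C; apply: ler_sum => S _.
    apply: le_trans (sum_sub_le (Q := xpredT) _ _) _ => //; first by move=> z; apply: mass_ge0.
    rewrite mass_partition (@run_norm _ _ w0 U T HU) //; exact: ltnW.
  rewrite (reindex_add k (fun g z => mass (run w0 U (fS g) s) [pred x | blk hn x == z])).
  rewrite /nY -sum1C; apply: ler_sum => S _.
  apply: le_trans (sum_sub_le (Q := xpredT) _ _) _ => //; first by move=> z; apply: mass_ge0.
  rewrite mass_partition (@run_norm _ _ w0 U T HU) //; exact: ltnW.
have eSx : forall c, Sx (fun _ _ => c) = c * (nX * (k * 7))%:R.
  move=> c; rewrite /Sx.
  transitivity (\sum_(S : {set bitvec mm} | #|S| == k) c * (k * 7)%:R).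
    apply: eq_bigr => S /eqP hS; rewrite sumcC; congr (c * _%:R).
    have := cardC S; rewrite card_bitvec hM hS => h.
    have -> : #|[pred z | z \notin S]| = #|[predC S]| by apply: eq_card.
    exact: arith1.
  by rewrite sumcC natrM /nX; ring.
have eSy : forall c, Sx (fun _ _ => c) = c * (nY * k.+1)%:R.
  move=> c; rewrite /Sx (reindex_add k (fun _ _ => c)).
  transitivity (\sum_(g : {set bitvec mm} | #|g| == k.+1) c * (k.+1)%:R).
    apply: eq_bigr => g /eqP hg; rewrite sumcC; congr (c * _%:R).
    by rewrite -hg; apply: eq_card.
  by rewrite sumcC natrM /nY; ring.
have hnat : (nX * (k * 7) <= 18 * (T * (nX + nY)))%N.
  have := chain; rewrite eSx !natrM natrD => h.
  rewrite -(ler_nat algC) !natrM natrD.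
  have e : forall x : algC, x = 18%:R * (1 / 18%:R * x) by move=> x; field.
  rewrite [X in X <= _]e ler_pM2l ?ltr0n //.
have eXY : (nX * (k * 7) = nY * k.+1)%N.
  apply/eqP; rewrite -(eqr_nat algC) -[X in X == _]mul1r -eSx eSy mul1r.
  by [].
have nX0 : (0 < nX)%N.
  have -> : nX = 'C(2 ^ mm, k).
    rewrite /nX -card_bitvec -card_draws; apply: eq_card => S; rewrite !inE.
    by [].
  by rewrite bin_gt0 hM arith4.
have h7 : (7 * k <= 162 * T)%N by apply: arith3 hnat.
have h7R : ((7 * k)%:R : algC) <= (162 * T)%:R by rewrite ler_nat.
rewrite ler_pdivrMr // ler_pdivrMr ?ltr0n // -subr_ge0.
have -> : T%:R * lam * 1000%:R - 1 =
   1000%:R / 162%:R * lam * ((162 * T)%:R - (7 * k)%:R) +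
   7000%:R / 5184%:R * (32%:R * lam * k%:R - 1) + 1816%:R / 5184%:R :> algC.
  by rewrite !natrM; field.
have hA' : 0 <= 32%:R * lam * k%:R - 1 by rewrite subr_ge0.
have h7' : 0 <= (162 * T)%:R - (7 * k)%:R :> algC by rewrite subr_ge0.
have c1 : 0 <= 1000%:R / 162%:R :> algC by apply: divr_ge0; rewrite ler0n.
have c2 : 0 <= 7000%:R / 5184%:R :> algC by apply: divr_ge0; rewrite ler0n.
have c3 : 0 <= 1816%:R / 5184%:R :> algC by apply: divr_ge0; rewrite ler0n.
apply: addr_ge0 => //; apply: addr_ge0; apply: mulr_ge0 => //.
by apply: mulr_ge0 => //; apply: ltW.
Qed.
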